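(* Let $\alpha\in(0,1)$ be irrational, and let $$B_n=\Big|\prod_{t=1}^{q_n-1}\frac{s_{nt}}{2\sin(\pi t/q_n)}\Big|,\qquad M_n=\lfloor(q_n-1)/2\rfloor,\qquad \tau_n=\lfloor q_n^{1/2}\rfloor.$$ Then for sufficiently large $n$, $$\log(B_n)=-2\pi^2\frac{c_n}{q_n^2}\sum_{t=1}^{M_n-1}\frac{D_t(\alpha_n^-)}{\sin(\pi t/q_n)\sin(\pi(t+1)/q_n)}-2\sum_{t=1}^{\tau_n}\sum_{j=2}^{\tau_n}\frac1j\Big(\frac{c_n\xi_{nt}}{t}\Big)^j+O(\tau_n^{-1}).$$
   Context: Continued fraction notation: - $\alpha=[0;a_1,a_2,\ldots]$. - $q_0=0$, $q_1=1$, $q_{n+1}=a_nq_n+q_{n-1}$, and $p_0=1$, $p_1=0$, $p_{n+1}=a_np_n+p_{n-1}$. - $\Lambda_n=q_n\alpha-p_n$. - $\alpha_n^+=[a_n;a_{n+1},\ldots]$ and $\alpha_n^-=[0;a_{n-1},\ldots,a_1]=q_{n-1}/q_n$. - $c_n=1/(\alpha_n^++\alpha_n^-)$. Auxiliary quantities, for $t\in\{0,\ldots,q_n-1\}$: - $\xi_{nt}=\{tq_{n-1}/q_n\}-\frac12$; - $s_{nt}=2\sin\big(\pi[t/q_n-|\Lambda_n|\xi_{nt}]\big)$. $D_t(\beta)=\sum_{s=1}^t(\{\beta s\}-\frac12)$. The $O$-constant is independent of $n$. *)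

(* Defs.v *)
From Stdlib Require Import Reals List Arith.
Import ListNotations.
Open Scope R_scope.

(* sum_{t=m}^{n} f t  (empty, i.e. 0, when n < m) *)
Definition sumR (m n : nat) (f : nat -> R) : R :=
  fold_right Rplus 0 (map f (seq m (S n - m))).
(* prod_{t=m}^{n} f t  (empty, i.e. 1, when n < m) *)
Definition prodR (m n : nat) (f : nat -> R) : R :=
  fold_right Rmult 1 (map f (seq m (S n - m))).

Fixpoint gauss (alpha : R) (k : nat) : R :=
  match k with
  | O => alpha
  | S k' => frac_part (/ gauss alpha k')
  end.

(* continued fraction digits a_n (n >= 1): a_n = floor(1/x_{n-1}) *)
Definition cf_a (alpha : R) (n : nat) : nat :=
  Z.to_nat (Int_part (/ gauss alpha (pred n))).

Fixpoint cf_q (alpha : R) (n : nat) : nat :=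
  match n with
  | O => 0%nat
  | S m => match m with
           | O => 1%nat
           | S k => (cf_a alpha m * cf_q alpha m + cf_q alpha k)%nat
           end
  end.

Fixpoint cf_p (alpha : R) (n : nat) : nat :=
  match n with
  | O => 1%nat
  | S m => match m with
           | O => 0%nat
           | S k => (cf_a alpha m * cf_p alpha m + cf_p alpha k)%nat
           end
  end.

Definition Lambda (alpha : R) (n : nat) : R :=
  INR (cf_q alpha n) * alpha - INR (cf_p alpha n).

(* alpha_n^+ = [a_n; a_{n+1}, ...] = 1 / x_{n-1} *)
Definition alpha_plus (alpha : R) (n : nat) : R := / gauss alpha (pred n).

Definition alpha_minus (alpha : R) (n : nat) : R :=
  INR (cf_q alpha (pred n)) / INR (cf_q alpha n).

Definition c_n (alpha : R) (n : nat) : R :=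
  / (alpha_plus alpha n + alpha_minus alpha n).

Definition xi (alpha : R) (n t : nat) : R :=
  frac_part (INR t * INR (cf_q alpha (pred n)) / INR (cf_q alpha n)) - 1 / 2.

Definition s_nt (alpha : R) (n t : nat) : R :=
  2 * sin (PI * (INR t / INR (cf_q alpha n) - Rabs (Lambda alpha n) * xi alpha n t)).

Definition D (t : nat) (beta : R) : R :=
  sumR 1 t (fun s => frac_part (beta * INR s) - 1 / 2).

Definition B_n (alpha : R) (n : nat) : R :=
  Rabs (prodR 1 (cf_q alpha n - 1)
          (fun t => s_nt alpha n t / (2 * sin (PI * INR t / INR (cf_q alpha n))))).

Definition M_n (alpha : R) (n : nat) : nat := ((cf_q alpha n - 1) / 2)%nat.

Definition tau_n (alpha : R) (n : nat) : nat := Nat.sqrt (cf_q alpha n).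

(* Main.v *)
Require Import Defs.
From Stdlib Require Import Reals Lra Lia Psatz List Arith ZArith.
From Coquelicot Require Coquelicot.
Open Scope R_scope.

Fixpoint sm (n : nat) (f : nat -> R) : R :=
  match n with O => 0 | S k => sm k f + f (S k) end.
Fixpoint pm (n : nat) (f : nat -> R) : R :=
  match n with O => 1 | S k => pm k f * f (S k) end.

Lemma fold_plus_acc l a : fold_right Rplus a l = fold_right Rplus 0 l + a.
Proof. induction l; simpl; [lra| rewrite IHl; lra]. Qed.
Lemma fold_mult_acc l a : fold_right Rmult a l = fold_right Rmult 1 l * a.
Proof. induction l; simpl; [lra| rewrite IHl; lra]. Qed.

Lemma sumR1 n f : sumR 1 n f = sm n f.
Proof.
  unfold sumR. replace (S n - 1)%nat with n by lia.
  induction n; [reflexivity|].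
  rewrite seq_S, map_app, fold_right_app. simpl.
  rewrite fold_plus_acc, IHn. replace (1 + n)%nat with (S n) by lia. lra.
Qed.

Lemma prodR1 n f : prodR 1 n f = pm n f.
Proof.
  unfold prodR. replace (S n - 1)%nat with n by lia.
  induction n; [reflexivity|].
  rewrite seq_S, map_app, fold_right_app. simpl.
  rewrite fold_mult_acc, IHn. replace (1 + n)%nat with (S n) by lia. lra.
Qed.

Lemma sm_shift n f : sm (S n) f = f 1%nat + sm n (fun t => f (S t)).
Proof. induction n; simpl in *; [lra|]. rewrite IHn. lra. Qed.

Lemma sumR2 n f : (1 <= n)%nat -> sumR 2 n f = sm n f - f 1%nat.
Proof.
  intros H. rewrite <- sumR1. unfold sumR.
  destruct n; [lia|]. replace (S (S n) - 1)%nat with (S n) by lia.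
  replace (S (S n) - 2)%nat with n by lia. simpl. lra.
Qed.

Lemma sm_ext n f g : (forall t, (1 <= t <= n)%nat -> f t = g t) -> sm n f = sm n g.
Proof. induction n; intros H; simpl; [lra|]. rewrite IHn, H; [lra|lia|]. intros; apply H; lia. Qed.

Lemma sm_plus n f g : sm n (fun t => f t + g t) = sm n f + sm n g.
Proof. induction n; simpl; [lra|]. rewrite IHn. lra. Qed.
Lemma sm_minus n f g : sm n (fun t => f t - g t) = sm n f - sm n g.
Proof. induction n; simpl; [lra|]. rewrite IHn. lra. Qed.
Lemma sm_scal n c f : sm n (fun t => c * f t) = c * sm n f.
Proof. induction n; simpl; [lra|]. rewrite IHn. lra. Qed.
Lemma sm_const n c : sm n (fun _ => c) = INR n * c.
Proof. induction n; simpl; [lra|]. rewrite IHn. destruct n; simpl; lra. Qed.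
Lemma sm_le n f g : (forall t, (1 <= t <= n)%nat -> f t <= g t) -> sm n f <= sm n g.
Proof. induction n; intros H; simpl; [lra|]. assert (H1 := H (S n)). 
  assert (sm n f <= sm n g) by (apply IHn; intros; apply H; lia). specialize (H1 ltac:(lia)). lra. Qed.
Lemma sm_abs n f : Rabs (sm n f) <= sm n (fun t => Rabs (f t)).
Proof. induction n; simpl. rewrite Rabs_R0; lra.
  eapply Rle_trans; [apply Rabs_triang|]. lra. Qed.
Lemma sm_abs_le n f g : (forall t, (1 <= t <= n)%nat -> Rabs (f t) <= g t) -> Rabs (sm n f) <= sm n g.
Proof. intros H. eapply Rle_trans; [apply sm_abs| apply sm_le; auto]. Qed.
Lemma sm_split a b f : sm (a + b) f = sm a f + sm b (fun t => f (a + t)%nat).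
Proof. induction b; simpl. rewrite Nat.add_0_r; lra.
  rewrite Nat.add_succ_r. simpl. rewrite IHb. lra. Qed.
Lemma sm_rev n f : sm n (fun t => f (S n - t)%nat) = sm n f.
Proof.
  revert f. induction n; intros f; [reflexivity|].
  cbn [sm].
  rewrite (sm_ext n (fun t => f (S (S n) - t)%nat) (fun t => (fun s => f (S s)) (S n - t)%nat)).
  2:{ intros t Ht. cbv beta. replace (S (S n) - t)%nat with (S (S n - t)) by lia. reflexivity. }
  rewrite (IHn (fun s => f (S s))). replace (S (S n) - S n)%nat with 1%nat by lia. pose proof (sm_shift n f) as E. simpl in E. rewrite E. lra.
Qed.

Lemma pm_ln n f : (forall t, (1 <= t <= n)%nat -> 0 < f t) ->
  0 < pm n f /\ ln (pm n f) = sm n (fun t => ln (f t)).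
Proof.
  induction n; intros H; simpl. split; [lra| apply ln_1].
  destruct IHn as [H1 H2]. intros; apply H; lia.
  assert (0 < f (S n)) by (apply H; lia).
  split. apply Rmult_lt_0_compat; auto.
  rewrite ln_mult; auto. rewrite H2; lra.
Qed.

Lemma sm_inv_sq a k : (1 <= a)%nat ->
  sm k (fun i => / INR (a + i) ^ 2) <= / INR a - / INR (a + k).
Proof.
  intros Ha. assert (1 <= INR a) by (apply (le_INR 1); auto).
  induction k; cbn [sm]. rewrite Nat.add_0_r; lra.
  assert (E : INR (a + S k) = INR (a + k) + 1) by (rewrite <- S_INR; f_equal; lia).
  rewrite E.
  assert (INR (a + k) >= INR a) by (rewrite plus_INR; pose proof (pos_INR k); lra).
  set (x := INR (a + k)) in *.
  assert (/ (x + 1) ^ 2 <= / x - / (x + 1)).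
  { replace (/ x - / (x+1)) with (/ (x * (x+1))) by (field; lra).
    apply Rinv_le_contravar. nra. nra. }
  lra.
Qed.

Lemma INR_fact_S n : INR (fact (S n)) = INR (S n) * INR (fact n).
Proof. rewrite fact_simpl, mult_INR. reflexivity. Qed.
Ltac factc := rewrite ?INR_fact_S; simpl INR; ring_simplify.

Lemma sin_lb_eq x : sin_lb x = x - x^3/6 + x^5/120 - x^7/5040.
Proof. unfold sin_lb, sin_approx, sin_term. cbn [sum_f_R0].
  replace (2*0+1)%nat with 1%nat by reflexivity. replace (2*1+1)%nat with 3%nat by reflexivity.
  replace (2*2+1)%nat with 5%nat by reflexivity. replace (2*3+1)%nat with 7%nat by reflexivity.
  rewrite !INR_fact_S. simpl INR. field. Qed.
Lemma sin_ub_eq x : sin_ub x = x - x^3/6 + x^5/120 - x^7/5040 + x^9/362880.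
Proof. unfold sin_ub, sin_approx, sin_term. cbn [sum_f_R0].
  replace (2*0+1)%nat with 1%nat by reflexivity. replace (2*1+1)%nat with 3%nat by reflexivity.
  replace (2*2+1)%nat with 5%nat by reflexivity. replace (2*3+1)%nat with 7%nat by reflexivity.
  replace (2*4+1)%nat with 9%nat by reflexivity.
  rewrite !INR_fact_S. simpl INR. field. Qed.

Lemma cos_ub_eq x : cos_ub x = 1 - x^2/2 + x^4/24 - x^6/720 + x^8/40320.
Proof. unfold cos_ub, cos_approx, cos_term. cbn [sum_f_R0].
  replace (2*0)%nat with 0%nat by reflexivity. replace (2*1)%nat with 2%nat by reflexivity.
  replace (2*2)%nat with 4%nat by reflexivity. replace (2*3)%nat with 6%nat by reflexivity.
  replace (2*4)%nat with 8%nat by reflexivity.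
  rewrite !INR_fact_S. simpl INR. simpl fact. simpl INR. field. Qed.

Lemma PI_bounds : 3 < PI <= 16/5.
Proof. pose proof PI2_3_2 as H1. split. lra.
  destruct (Rle_lt_dec PI (16/5)) as [h|h]; [exact h|exfalso].
  destruct (COS (8/5) ltac:(lra) ltac:(lra)) as [_ H2]. rewrite cos_ub_eq in H2.
  assert (0 <= cos (8/5)) by (apply cos_ge_0; lra). lra. Qed.

Lemma sin_le_x x : 0 <= x -> sin x <= x.
Proof.
  intros H. destruct (Rle_lt_dec x 1).
  - pose proof PI_bounds. destruct (SIN x H ltac:(lra)) as [_ H2].
    rewrite sin_ub_eq in H2. assert (x^2 <= 1) by nra.
    assert (x^3 = x*x^2) by ring. assert (x^5 = x^3*x^2) by ring.
    assert (x^7 = x^5*x^2) by ring. assert (x^9 = x^7*x^2) by ring.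
    assert (0 <= x^3) by (apply pow_le; lra). assert (0 <= x^5) by (apply pow_le; lra).
    assert (0 <= x^7) by (apply pow_le; lra). nra.
  - pose proof (SIN_bound x). lra.
Qed.

Lemma sin_ge_cubic x : 0 <= x <= PI -> x - x^3/6 <= sin x.
Proof.
  intros [H1 H2]. pose proof PI_bounds. destruct (SIN x H1 H2) as [H3 _].
  rewrite sin_lb_eq in H3. assert (x^2 <= 16) by nra.
  assert (x^7 = x^5*x^2) by ring. assert (0 <= x^5) by (apply pow_le; lra). nra.
Qed.

Lemma sin_ge_half x : 0 <= x <= 17/10 -> x / 2 <= sin x.
Proof.
  intros H. pose proof PI_bounds. pose proof (sin_ge_cubic x ltac:(lra)).
  assert (x^3 = x * x^2) by ring. assert (x^2 <= 3) by nra. nra.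
Qed.

Lemma sin_nonneg_le x : 0 <= x -> - x <= sin x.
Proof.
  intros H. pose proof PI_bounds. destruct (Rle_lt_dec x PI).
  - pose proof (sin_ge_0 x H r). lra.
  - pose proof (SIN_bound x). lra.
Qed.

Lemma Rabs_sin_le x : Rabs (sin x) <= Rabs x.
Proof.
  destruct (Rle_lt_dec 0 x).
  - pose proof (sin_le_x x r). pose proof (sin_nonneg_le x r).
    rewrite (Rabs_pos_eq x r). apply Rabs_le. lra.
  - pose proof (sin_le_x (-x) ltac:(lra)). pose proof (sin_nonneg_le (-x) ltac:(lra)).
    rewrite sin_neg in *. rewrite (Rabs_left x) by lra. apply Rabs_le. lra.
Qed.

Lemma cos_ge_quad x : 1 - x^2/2 <= cos x.
Proof.
  assert (E : cos x = 1 - 2 * sin (x/2) ^ 2).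
  { replace x with (2 * (x/2)) at 1 by field. rewrite cos_2a_sin. ring. }
  rewrite E. pose proof (Rabs_sin_le (x/2)).
  assert (sin (x/2) ^ 2 <= (x/2)^2).
  { rewrite <- (pow2_abs (sin _)), <- (pow2_abs (x/2)). apply pow_incr. split; [apply Rabs_pos|assumption]. }
  nra.
Qed.

Lemma one_minus_cos x : Rabs (1 - cos x) <= x^2/2.
Proof. pose proof (cos_ge_quad x). pose proof (COS_bound x). apply Rabs_le. nra. Qed.

Lemma sin_minus_x x : Rabs x <= PI -> Rabs (sin x - x) <= Rabs x ^ 3 / 6.
Proof.
  intros H. destruct (Rle_lt_dec 0 x).
  - rewrite (Rabs_pos_eq x) in * by lra. pose proof (sin_le_x x r).
    pose proof (sin_ge_cubic x ltac:(lra)). apply Rabs_le. lra.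
  - rewrite (Rabs_left x) in * by lra. pose proof (sin_le_x (-x) ltac:(lra)).
    pose proof (sin_ge_cubic (-x) ltac:(lra)). rewrite sin_neg in *. apply Rabs_le.
    replace ((-x)^3) with (- x^3) in * by ring. lra.
Qed.
Lemma Rabs_le_inv x b : Rabs x <= b -> -b <= x <= b.
Proof. intros H. unfold Rabs in H. destruct (Rcase_abs x); lra. Qed.


Lemma Rabs_div a b : b <> 0 -> Rabs (a / b) = Rabs a / Rabs b.
Proof. intros H. unfold Rdiv. rewrite Rabs_mult, Rabs_inv. reflexivity. Qed.

Lemma ln_div x y : 0 < x -> 0 < y -> ln (x / y) = ln x - ln y.
Proof. intros Hx Hy. unfold Rdiv. rewrite ln_mult, ln_Rinv; try lra. apply Rinv_0_lt_compat; lra. Qed.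

Module LnS.
Import Coquelicot.Coquelicot.
Lemma P_derive m y : is_derive (fun z => sm m (fun j => z ^ j / INR j)) y (sm m (fun j => y ^ pred j)).
Proof.
  induction m; simpl.
  - auto_derive; auto.
  - apply (is_derive_plus (fun z => sm m (fun j => z ^ j / INR j)) (fun z => z ^ S m / INR (S m))).
    exact IHm.
    assert (INR (S m) <> 0) by (apply not_0_INR; lia).
    auto_derive; auto. change (match m with O => 1 | S _ => INR m + 1 end) with (INR (S m)). simpl pred. field; auto.
Qed.

Lemma geom m y : sm m (fun j => y ^ pred j) * (1 - y) = 1 - y ^ m.
Proof. induction m; simpl; [ring|]. rewrite Rmult_plus_distr_r, IHm.
  destruct m; simpl; ring. Qed.

Lemma sm_zero_pow m : sm m (fun j => 0 ^ j / INR j) = 0.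
Proof. induction m; cbn [sm]; [reflexivity|]. rewrite IHm. simpl pow. field. apply not_0_INR; lia. Qed.

Lemma ln_series m x : Rabs x <= 1/2 ->
  Rabs (ln (1 - x) + sm m (fun j => x ^ j / INR j)) <= 2 * Rabs x ^ S m.
Proof.
  intros Hx.
  set (F := fun z => ln (1 - z) + sm m (fun j => z ^ j / INR j)).
  set (F' := fun z => - z ^ m / (1 - z)).
  assert (HD : forall c, Rabs c <= 1/2 -> derivable_pt_lim F c (F' c)).
  { intros c Hc. apply is_derive_Reals.
    assert (1 - c > 0) by (apply Rabs_le_inv in Hc; lra).
    unfold F, F'.
    apply (is_derive_ext (fun z => ln (1 - z) + sm m (fun j => z ^ j / INR j))). reflexivity.
    replace (- c ^ m / (1 - c)) with (- / (1 - c) + sm m (fun j => c ^ pred j)).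
    2:{ apply (Rmult_eq_reg_r (1 - c)); [|lra]. rewrite Rmult_plus_distr_r, geom. field. lra. }
    apply (is_derive_plus (fun z => ln (1 - z))). 2: apply P_derive.
    auto_derive. lra. field. lra. }
  assert (F0 : F 0 = 0) by (unfold F; rewrite Rminus_0_r, ln_1, sm_zero_pow; ring).
  assert (HB : forall c, Rabs c <= Rabs x -> Rabs (F' c) <= 2 * Rabs x ^ m).
  { intros c Hc. unfold F'. assert (Rabs c <= 1/2) by lra.
    apply Rabs_le_inv in H as H'.
    rewrite Rabs_div by lra. rewrite Rabs_Ropp, RPow_abs. rewrite (Rabs_pos_eq (1 - c)) by lra.
    apply (Rmult_le_reg_r (1 - c)); [lra|]. unfold Rdiv. rewrite Rmult_assoc, Rinv_l, Rmult_1_r by lra.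
    assert (Rabs c ^ m <= Rabs x ^ m) by (apply pow_incr; split; [apply Rabs_pos|lra]).
    assert (0 <= Rabs x ^ m) by (apply pow_le; apply Rabs_pos). assert (1 - c >= 1/2) by lra. rewrite <- !RPow_abs. nra. }
  change (Rabs (F x) <= 2 * Rabs x ^ S m).
  destruct (Rtotal_order x 0) as [Hlt|[Heq|Hgt]].
  - destruct (MVT_cor2 F F' x 0 Hlt) as [c [Hc1 Hc2]].
    { intros c Hc. apply HD. apply Rabs_le. apply Rabs_le_inv in Hx. lra. }
    rewrite F0 in Hc1. assert (Rabs c <= Rabs x) by (rewrite !Rabs_left1; lra).
    specialize (HB c H). replace (F x) with (- (F' c * (0 - x))) by lra.
    rewrite Rabs_Ropp, Rabs_mult. simpl. rewrite (Rabs_pos_eq (0 - x)) by lra.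
    rewrite (Rabs_left1 x) in * by lra. assert (0 <= Rabs (F' c)) by apply Rabs_pos. nra.
  - subst. rewrite F0, Rabs_R0. simpl. lra.
  - destruct (MVT_cor2 F F' 0 x Hgt) as [c [Hc1 Hc2]].
    { intros c Hc. apply HD. apply Rabs_le. apply Rabs_le_inv in Hx. lra. }
    rewrite F0 in Hc1. assert (Rabs c <= Rabs x) by (rewrite !Rabs_pos_eq; lra).
    specialize (HB c H). replace (F x) with (F' c * (x - 0)) by lra.
    rewrite Rabs_mult. simpl. rewrite Rminus_0_r. 
    assert (0 <= Rabs x) by apply Rabs_pos. nra.
Qed.

End LnS.
Notation ln_series := LnS.ln_series.

Lemma ln1p_bound y : Rabs y <= 1/2 -> Rabs (ln (1 + y) - y) <= 2 * y ^ 2.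
Proof.
  intros H. pose proof (ln_series 1 (-y)) as E. rewrite Rabs_Ropp in E. specialize (E H).
  replace (1 - - y) with (1 + y) in E by ring. cbn [sm] in E.
  replace (0 + (- y) ^ 1 / INR 1) with (- y) in E by (simpl; field).
  replace (ln (1 + y) + - y) with (ln (1 + y) - y) in E by ring.
  replace (Rabs y ^ 2) with (y ^ 2) in E. exact E. rewrite RPow_abs. symmetry. apply Rabs_pos_eq. simpl. nra.
Qed.

Lemma sinc_ln z : 0 < z <= 1 -> Rabs (ln (sin z / z)) <= z ^ 2 / 3.
Proof.
  intros H. pose proof PI_bounds. pose proof (sin_le_x z ltac:(lra)).
  pose proof (sin_ge_cubic z ltac:(lra)).
  set (y := sin z / z - 1).
  assert (Hy1 : y <= 0). { unfold y. apply Rle_minus_Rle_0 || idtac.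
    assert (sin z / z <= 1). { apply (Rmult_le_reg_r z); [lra|]. unfold Rdiv. rewrite Rmult_assoc, Rinv_l; lra. } lra. }
  assert (Hy2 : - (z ^ 2 / 6) <= y). { unfold y.
    assert (1 - z^2/6 <= sin z / z). { apply (Rmult_le_reg_r z); [lra|]. unfold Rdiv. rewrite Rmult_assoc, Rinv_l by lra. nra. } lra. }
  assert (z ^ 2 <= 1) by nra.
  replace (sin z / z) with (1 + y) by (unfold y; ring).
  pose proof (ln1p_bound y ltac:(apply Rabs_le; lra)) as HL.
  apply Rabs_le_inv in HL. apply Rabs_le. nra.
Qed.

Lemma cot_le x : 0 < x <= PI / 2 -> 0 <= cos x / sin x <= 2 / x.
Proof.
  intros H. pose proof PI_bounds. pose proof (sin_ge_half x ltac:(lra)).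
  pose proof (cos_ge_0 x ltac:(lra) ltac:(lra)). pose proof (COS_bound x).
  split. unfold Rdiv; apply Rmult_le_pos; [lra| left; apply Rinv_0_lt_compat; lra].
  unfold Rdiv. apply (Rmult_le_reg_r (sin x)); [lra|]. rewrite Rmult_assoc, Rinv_l by lra.
  apply (Rmult_le_reg_r x); [lra|]. rewrite Rmult_1_r.
  replace (2 * / x * sin x * x) with (2 * sin x) by (field; lra). nra.
Qed.

Lemma cot_diff x : 0 < x <= 1 -> Rabs (/ x - cos x / sin x) <= x.
Proof.
  intros H. pose proof PI_bounds. pose proof (sin_ge_half x ltac:(lra)).
  pose proof (sin_le_x x ltac:(lra)). pose proof (sin_ge_cubic x ltac:(lra)).
  pose proof (cos_ge_quad x). pose proof (COS_bound x).
  replace (/ x - cos x / sin x) with ((sin x - x * cos x) / (x * sin x)) by (field; lra).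
  rewrite Rabs_div by nra. rewrite (Rabs_pos_eq (x * sin x)) by nra.
  apply (Rmult_le_reg_r (x * sin x)); [nra|]. unfold Rdiv. rewrite Rmult_assoc, Rinv_l, Rmult_1_r by nra.
  apply Rabs_le. assert (x^3 = x * x^2) by ring. split; nra.
Qed.


Lemma small_t_bound (th u : R) (t tau : nat) :
  0 < th -> Rabs u <= 1/2 -> (1 <= t <= tau)%nat -> th * (INR tau + 1) <= 1 ->
  Rabs (ln (sin (th * (INR t - u)) / sin (th * INR t))
        - (- th * u * (cos (th * INR t) / sin (th * INR t))
           - (sm tau (fun j => (u / INR t) ^ j / INR j) - u / INR t)))
  <= (1/2) ^ tau + 2 * th ^ 2 * (INR tau + 1) ^ 2.
Proof.
  intros Hth Hu Ht Htau.
  pose proof PI_bounds.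
  assert (HT : 1 <= INR t) by (apply (le_INR 1); lia).
  assert (HTt : INR t <= INR tau) by (apply le_INR; lia).
  apply Rabs_le_inv in Hu as Hu'.
  set (T := INR t) in *. set (a := th * (T - u)). set (b := th * T).
  assert (Ha : 0 < a <= th * (INR tau + 1)) by (unfold a; split; nra).
  assert (Hb : 0 < b <= th * (INR tau + 1)) by (unfold b; split; nra).
  assert (sa : 0 < sin a) by (apply sin_gt_0; lra).
  assert (sb : 0 < sin b) by (apply sin_gt_0; lra).
  set (x := u / T).
  assert (Hx : Rabs x <= 1/2).
  { unfold x. rewrite Rabs_div by lra. rewrite (Rabs_pos_eq T) by lra.
    apply (Rmult_le_reg_r T); [lra|]. unfold Rdiv. rewrite Rmult_assoc, Rinv_l by lra. nra. }
  assert (E : sin a / sin b = (1 - x) * ((sin a / a) / (sin b / b))).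
  { unfold x, a, b in *. field. repeat split; try (apply Rgt_not_eq; lra); try (intro; nra). }
  assert (H1x : 0 < 1 - x) by (apply Rabs_le_inv in Hx; lra).
  assert (Hsa : 0 < sin a / a) by (apply Rdiv_lt_0_compat; lra).
  assert (Hsb : 0 < sin b / b) by (apply Rdiv_lt_0_compat; lra).
  rewrite E, ln_mult, ln_div; try lra; try (apply Rdiv_lt_0_compat; lra).
  pose proof (ln_series tau x Hx) as L1.
  assert (L1' : 2 * Rabs x ^ S tau <= (1/2) ^ tau).
  { assert (Rabs x ^ S tau <= (1/2) ^ S tau) by (apply pow_incr; split; [apply Rabs_pos|lra]).
    simpl in H0. simpl. lra. }
  pose proof (cot_diff b ltac:(lra)) as L2.
  pose proof (sinc_ln a ltac:(lra)) as L3.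
  pose proof (sinc_ln b ltac:(lra)) as L4.
  assert (L2' : Rabs (- x + th * u * (cos b / sin b)) <= th ^ 2 * T / 2).
  { replace (- x + th * u * (cos b / sin b)) with (- (u * th) * (/ b - cos b / sin b)).
    2:{ unfold x, b in *. field. repeat split; try (apply Rgt_not_eq; lra); try (intro; nra). }
    rewrite Rabs_mult, Rabs_Ropp, Rabs_mult, (Rabs_pos_eq th) by lra.
    assert (0 <= Rabs (/ b - cos b / sin b)) by apply Rabs_pos.
    assert (HH : Rabs u * th * Rabs (/ b - cos b / sin b) <= (1/2) * th * b).
    { apply Rmult_le_compat; try nra. apply Rmult_le_pos; [apply Rabs_pos|lra]. }
    simpl. assert (EE : th * (th * 1) * T / 2 = 1/2 * th * b) by (unfold b; lra). rewrite EE. exact HH. }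
  assert (a ^ 2 <= (th * (INR tau + 1)) ^ 2) by (apply pow_incr; lra).
  assert (b ^ 2 <= (th * (INR tau + 1)) ^ 2) by (apply pow_incr; lra).
  assert (th ^ 2 * T / 2 <= th ^ 2 * (INR tau + 1) ^ 2 / 2).
  { assert (T <= (INR tau + 1)^2) by nra. assert (0 < th^2) by nra. nra. }
  fold T. fold b. fold a.
  replace (ln (1 - x) + (ln (sin a / a) - ln (sin b / b)) -
     (- th * u * (cos b / sin b) - (sm tau (fun j : nat => x ^ j / INR j) - x)))
    with ((ln (1 - x) + sm tau (fun j => x ^ j / INR j)) + (- x + th * u * (cos b / sin b))
          + ln (sin a / a) - ln (sin b / b)) by ring.
  eapply Rle_trans. apply Rabs_triang. rewrite Rabs_Ropp.
  eapply Rle_trans. apply Rplus_le_compat_r. apply Rabs_triang.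
  eapply Rle_trans. apply Rplus_le_compat_r. apply Rplus_le_compat_r. apply Rabs_triang.
  replace ((th * (INR tau + 1)) ^ 2) with (th ^ 2 * (INR tau + 1) ^ 2) in * by ring.
  assert (0 <= th ^ 2 * (INR tau + 1) ^ 2) by (apply Rmult_le_pos; apply pow_le; lra). lra.
Qed.

Lemma large_t_bound (th u T : R) :
  0 < th <= 1/25 -> Rabs u <= 1/2 -> 11 <= T -> th * T <= PI / 2 ->
  Rabs (ln (sin (th * (T - u)) / sin (th * T)) - (- th * u * (cos (th * T) / sin (th * T))))
  <= th ^ 2 + 4 / T ^ 2.
Proof.
  intros Hth Hu HT Hb. pose proof PI_bounds.
  apply Rabs_le_inv in Hu as Hu'.
  set (b := th * T) in *. set (v := th * u).
  assert (Hb0 : 0 < b) by (unfold b; nra).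
  assert (sb : 0 < sin b) by (apply sin_gt_0; lra).
  pose proof (cot_le b ltac:(lra)) as Hcot. set (k := cos b / sin b) in *.
  assert (Hv : Rabs v <= th / 2) by (unfold v; rewrite Rabs_mult, Rabs_pos_eq by lra; nra).
  assert (E : sin (th * (T - u)) / sin b = cos v - sin v * k).
  { replace (th * (T - u)) with (b - v) by (unfold b, v; ring). rewrite sin_minus.
    unfold k. field. lra. }
  rewrite E.
  set (y := cos v - sin v * k - 1).
  pose proof (one_minus_cos v) as C1.
  pose proof (Rabs_sin_le v) as S1.
  assert (S2 := sin_minus_x v ltac:(lra)).
  assert (Hk : k <= 2 / (th * T)) by (unfold b in Hcot; lra).
  assert (Hk' : th * k <= 2 / T).
  { replace (2 / T) with (th * (2 / (th * T))) by (field; lra). apply Rmult_le_compat_l; lra. }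
  assert (Hv2 : v ^ 2 <= th ^ 2 / 4).
  { rewrite <- (pow2_abs v). replace (th^2/4) with ((th/2)^2) by field. apply pow_incr. split; [apply Rabs_pos|lra]. }
  assert (Hsk : Rabs (sin v * k) <= 1 / T).
  { rewrite Rabs_mult, (Rabs_pos_eq k) by lra.
    assert (Rabs (sin v) * k <= (th / 2) * k) by (apply Rmult_le_compat_r; lra).
    assert (th / 2 * k <= 1 / T) by lra. lra. }
  assert (Hy : Rabs y <= th ^ 2 / 8 + 1 / T).
  { unfold y. replace (cos v - sin v * k - 1) with (- (1 - cos v) - sin v * k) by ring.
    eapply Rle_trans. apply Rabs_triang. rewrite Rabs_Ropp, Rabs_Ropp. lra. }
  assert (HyA : Rabs (y - - th * u * k) <= th ^ 2 / 6).
  { unfold y. replace (cos v - sin v * k - 1 - - th * u * k) with (- (1 - cos v) - (sin v - v) * k)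
      by (unfold v; ring).
    eapply Rle_trans. apply Rabs_triang. rewrite Rabs_Ropp, Rabs_Ropp, Rabs_mult, (Rabs_pos_eq k) by lra.
    assert (Rabs v ^ 3 <= (th/2)^3) by (apply pow_incr; split; [apply Rabs_pos|lra]).
    assert (Rabs (sin v - v) * k <= (th/2)^3/6 * k) by (apply Rmult_le_compat_r; lra).
    assert ((th/2)^3/6 * k = th^2/48 * (th * k)) by lra.
    assert (th^2/48 * (th * k) <= th^2/48 * (2 / T)) by (apply Rmult_le_compat_l; nra).
    assert (2 / T <= 2/11) by (apply Rmult_le_compat_l; [lra| apply Rinv_le_contravar; lra]).
    nra. }
  assert (Hth2 : th ^ 2 <= 1/625) by nra.
  assert (Hy2 : Rabs y <= 1/2).
  { assert (1 / T <= 1/11) by (apply Rmult_le_compat_l; [lra| apply Rinv_le_contravar; lra]). lra. }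
  pose proof (ln1p_bound y Hy2) as L.
  replace (cos v - sin v * k) with (1 + y) by (unfold y; ring).
  assert (y ^ 2 <= 2 * ((th^2/8)^2 + (1/T)^2)).
  { rewrite <- (pow2_abs y). assert (0 <= Rabs y) by apply Rabs_pos.
    assert (0 <= 1/T) by (apply Rmult_le_pos; [lra| left; apply Rinv_0_lt_compat; lra]).
    assert (Rabs y ^ 2 <= (th^2/8 + 1/T)^2) by (apply pow_incr; lra).
    assert (0 <= (th^2/8 - 1/T)^2) by (apply pow2_ge_0). 
    assert ((th^2/8 + 1/T)^2 + (th^2/8 - 1/T)^2 = 2 * ((th^2/8)^2 + (1/T)^2)) by lra.
    lra. }
  replace (ln (1 + y) - - th * u * k) with ((ln (1 + y) - y) + (y - - th * u * k)) by lra.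
  eapply Rle_trans. apply Rabs_triang.
  replace ((1/T)^2) with (1 / T^2) in * by (field; lra).
  assert (th^4 <= th^2) by nra. 
  replace ((th ^ 2 / 8) ^ 2) with (th^4/64) in * by field.
  assert (E4 : 4 / T ^ 2 = 4 * (1 / T ^ 2)) by (field; lra). rewrite E4. assert (0 <= th^2) by nra. lra.
Qed.


Lemma fold_sym (q : nat) (L : nat -> R) : (2 <= q)%nat ->
  (forall t, (1 <= t <= q - 1)%nat -> L (q - t)%nat = L t) ->
  (forall t, (2 * t = q)%nat -> L t = 0) ->
  sm (q - 1) L = 2 * sm ((q - 1) / 2) L.
Proof.
  intros Hq Hs H0.
  set (M := ((q - 1) / 2)%nat). set (K := (q - 1 - M)%nat).
  assert (HM : (2 * M <= q - 1 <= 2 * M + 1)%nat).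
  { pose proof (Nat.div_mod (q - 1) 2 ltac:(lia)). pose proof (Nat.mod_upper_bound (q - 1) 2 ltac:(lia)). unfold M. lia. }
  replace (q - 1)%nat with (M + K)%nat at 1 by (unfold K; lia).
  rewrite sm_split.
  rewrite <- (sm_rev K (fun t => L (M + t)%nat)).
  rewrite (sm_ext K _ L).
  2:{ intros t Ht. rewrite <- Hs by (unfold K in *; lia). f_equal. unfold K in *; lia. }
  assert (K = M \/ K = S M)%nat as [E|E] by (unfold K; lia).
  - rewrite E. lra.
  - rewrite E. cbn [sm]. rewrite (H0 (S M)) by (unfold K in *; lia). lra.
Qed.

Lemma sbp m (x g : nat -> R) :
  sm (S m) (fun t => x t * g t) = sm (S m) x * g (S m) + sm m (fun t => sm t x * (g t - g (S t))).
Proof.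
  induction m.
  - cbn [sm]. lra.
  - cbn [sm] in *. rewrite IHm. lra.
Qed.

Lemma pow2_ge k : INR k ^ 2 <= 2 * 2 ^ k.
Proof.
  assert (H1 : forall k, 2 * INR k + 1 <= 2 * 2 ^ k).
  { induction k0. simpl; lra. rewrite S_INR. pose proof (pow_R1_Rle 2 k0 ltac:(lra)). simpl. lra. }
  induction k. simpl; lra. rewrite S_INR. specialize (H1 k). simpl in *. lra.
Qed.


Lemma frac_le a b c d : 0 < b -> 0 < d -> a * d <= c * b -> a / b <= c / d.
Proof. intros Hb Hd H. apply (Rmult_le_reg_r (b * d)); [nra|].
  replace (a / b * (b * d)) with (a * d) by (field; lra).
  replace (c / d * (b * d)) with (c * b) by (field; lra). lra. Qed.

Lemma INR100 : INR 100 = 100.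
Proof. rewrite INR_IZR_INZ. reflexivity. Qed.

Lemma sbp_cot m th (x : nat -> R) :
  (forall t, (1 <= t <= S m)%nat -> 0 < sin (th * INR t)) ->
  sm (S m) (fun t => x t * (cos (th * INR t) / sin (th * INR t))) =
  sm (S m) x * (cos (th * INR (S m)) / sin (th * INR (S m)))
  + sin th * sm m (fun t => sm t x / (sin (th * INR t) * sin (th * INR (S t)))).
Proof.
  intros Hs. rewrite sbp. f_equal. rewrite <- sm_scal. apply sm_ext. intros t Ht.
  assert (h1 := Hs t ltac:(lia)). assert (h2 := Hs (S t) ltac:(lia)).
  replace (sin th) with (sin (th * INR (S t) - th * INR t)) by (f_equal; rewrite S_INR; ring).
  rewrite sin_minus. field. lra.
Qed.

Lemma analytic (q : nat) (c : R) (xi : nat -> R) :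
  (100 <= q)%nat -> 0 <= c <= 1 -> (forall t, Rabs (xi t) <= 1/2) ->
  (forall t, (1 <= t <= q - 1)%nat -> xi (q - t)%nat = - xi t) ->
  let th := PI / INR q in
  let tau := Nat.sqrt q in
  let M := ((q - 1) / 2)%nat in
  Rabs (ln (Rabs (pm (q - 1) (fun t => sin (th * (INR t - c * xi t)) / sin (th * INR t))))
        - (- 2 * th ^ 2 * c * sm (M - 1) (fun t => sm t xi / (sin (th * INR t) * sin (th * INR (S t))))
           - 2 * sm tau (fun t => sm tau (fun j => (c * xi t / INR t) ^ j / INR j) - c * xi t / INR t)))
  <= 400 / INR tau.
Proof.
  intros Hq Hc Hxi Hsym th tau M.
  pose proof PI_bounds as HPI.
  pose proof (Nat.sqrt_spec q ltac:(lia)) as Hsq. fold tau in Hsq.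
  assert (HM : (2 * M <= q - 1 <= 2 * M + 1)%nat).
  { pose proof (Nat.div_mod (q - 1) 2 ltac:(lia)). pose proof (Nat.mod_upper_bound (q - 1) 2 ltac:(lia)). unfold M. lia. }
  assert (Htau10 : (10 <= tau)%nat) by nia.
  assert (HtauM : (tau <= M)%nat) by nia.
  assert (Rq : 100 <= INR q) by (rewrite <- INR100; apply le_INR; lia).
  assert (Rtau : 10 <= INR tau) by (replace 10 with (INR 10) by (simpl; lra); apply le_INR; lia).
  assert (Rsq1 : INR tau * INR tau <= INR q) by (rewrite <- mult_INR; apply le_INR; lia).
  assert (Rsq2 : INR q < (INR tau + 1) * (INR tau + 1)) by (rewrite <- S_INR, <- mult_INR; apply lt_INR; lia).
  assert (E2 : INR (2*M) = 2 * INR M) by (rewrite mult_INR; simpl; lra).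
  assert (Eq1 : INR (q-1) = INR q - 1) by (rewrite minus_INR by lia; simpl; lra).
  assert (E3 : INR (2*M+1) = 2*INR M + 1) by (rewrite plus_INR, mult_INR; simpl; lra).
  assert (RM1 : 2 * INR M <= INR q - 1) by (rewrite <- E2, <- Eq1; apply le_INR; lia).
  assert (RM2 : INR q - 2 <= 2 * INR M) by (assert (INR (q-1) <= INR (2*M+1)) by (apply le_INR; lia); lra).
  assert (Hthq : th * INR q = PI) by (unfold th; field; lra).
  assert (Hth : 0 < th <= 1/25).
  { unfold th. split. apply Rdiv_lt_0_compat; lra. apply frac_le; lra. }
  assert (Hth1 : th * (INR tau + 1) <= 1).
  { unfold th. replace (PI / INR q * (INR tau + 1)) with (PI * (INR tau + 1) / INR q) by (field; lra).
    replace 1 with (INR q / INR q) at 2 by (field; lra). assert (PI * (INR tau + 1) <= INR q) by nra. apply frac_le; try lra. apply Rmult_le_compat_r; lra. }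
  assert (Hu : forall t, Rabs (c * xi t) <= 1/2).
  { intros t. rewrite Rabs_mult, (Rabs_pos_eq c) by lra. specialize (Hxi t). 
    assert (0 <= Rabs (xi t)) by apply Rabs_pos. nra. }
  set (f := fun t => sin (th * (INR t - c * xi t)) / sin (th * INR t)).
  assert (Hpos : forall t, (1 <= t <= q - 1)%nat -> 0 < f t).
  { intros t Ht. unfold f.
    assert (1 <= INR t) by (apply (le_INR 1); lia).
    assert (INR t <= INR q - 1) by (rewrite <- Eq1; apply le_INR; lia).
    specialize (Hu t). apply Rabs_le_inv in Hu.
    apply Rdiv_lt_0_compat; apply sin_gt_0; nra. }
  destruct (pm_ln (q - 1) f Hpos) as [Hp Hl].
  rewrite (Rabs_pos_eq _ (Rlt_le _ _ Hp)), Hl.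
  set (L := fun t => ln (f t)).
  rewrite (fold_sym q L ltac:(lia)).
  2:{ intros t Ht. unfold L, f. rewrite Hsym by lia. rewrite minus_INR by lia.
      replace (th * (INR q - INR t - c * - xi t)) with (PI - th * (INR t - c * xi t)) by (rewrite <- Hthq; ring).
      replace (th * (INR q - INR t)) with (PI - th * INR t) by (rewrite <- Hthq; ring).
      rewrite !sin_PI_x. reflexivity. }
  2:{ intros t Ht. unfold L, f. assert (xi t = 0).
      { pose proof (Hsym t ltac:(lia)). replace (q - t)%nat with t in H by lia. lra. }
      rewrite H, Rmult_0_r, Rminus_0_r.
      assert (1 <= INR t) by (apply (le_INR 1); lia).
      assert (INR t <= INR q - 1) by (rewrite <- Eq1; apply le_INR; lia).
      assert (0 < sin (th * INR t)) by (apply sin_gt_0; nra).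
      unfold Rdiv. rewrite Rinv_r by lra. apply ln_1. }
  fold M.
  set (A := fun t => - th * (c * xi t) * (cos (th * INR t) / sin (th * INR t))).
  set (P := fun t => sm tau (fun j => (c * xi t / INR t) ^ j / INR j) - c * xi t / INR t).
  set (Sg := sm (M - 1) (fun t => sm t xi / (sin (th * INR t) * sin (th * INR (S t))))).
  assert (X1 : Rabs (sm tau L - sm tau (fun t => A t - P t))
               <= INR tau * ((1/2)^tau + 2 * th^2 * (INR tau + 1)^2)).
  { rewrite <- sm_minus. rewrite <- sm_const. apply sm_abs_le. intros t Ht.
    exact (small_t_bound th (c * xi t) t tau ltac:(lra) (Hu t) Ht Hth1). }
  assert (X2 : Rabs (sm (M - tau) (fun k => L (tau + k)%nat) - sm (M - tau) (fun k => A (tau + k)%nat))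
      <= INR q * th ^ 2 + 4 / INR tau).
  { rewrite <- sm_minus.
    eapply Rle_trans. apply (sm_abs_le _ _ (fun k => th^2 + 4 * / INR (tau + k) ^ 2)).
    - intros k Hk. 
      assert (h11 : 11 <= INR (tau + k)) by (replace 11 with (INR 11) by (simpl; lra); apply le_INR; lia).
      assert (hM : INR (tau + k) <= INR M) by (apply le_INR; lia).
      assert (hb : th * INR (tau + k) <= PI / 2) by nra.
      pose proof (large_t_bound th (c * xi (tau+k)%nat) (INR (tau + k)) Hth (Hu _) h11 hb) as HH.
      unfold Rdiv in HH at 3. exact HH.
    - rewrite sm_plus, sm_const, sm_scal.
      pose proof (sm_inv_sq tau (M - tau) ltac:(lia)) as HI.
      assert (0 < / INR (tau + (M - tau))) by (apply Rinv_0_lt_compat; apply lt_0_INR; lia).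
      assert (INR (M - tau) <= INR q) by (apply le_INR; lia).
      assert (0 <= th ^ 2) by nra.
      unfold Rdiv. nra. }
  assert (SL : sm M L = sm tau L + sm (M - tau) (fun k => L (tau + k)%nat))
    by (rewrite <- sm_split; f_equal; lia).
  assert (SA : sm M A = sm tau A + sm (M - tau) (fun k => A (tau + k)%nat))
    by (rewrite <- sm_split; f_equal; lia).
  assert (Hsin : forall t, (1 <= t <= M)%nat -> 0 < sin (th * INR t)).
  { intros t Ht. assert (1 <= INR t) by (apply (le_INR 1); lia).
    assert (INR t <= INR M) by (apply le_INR; lia). apply sin_gt_0; nra. }
  assert (SB : sm M A = - th * c * (sm M xi * (cos (th * INR M) / sin (th * INR M)) + sin th * Sg)).
  { rewrite (sm_ext M A (fun t => (- th * c) * (xi t * (cos (th * INR t) / sin (th * INR t))))).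
    2:{ intros t Ht. unfold A. ring. }
    rewrite sm_scal. f_equal.
    pose proof (sbp_cot (M - 1) th xi) as HS. replace (S (M - 1)) with M in HS by lia.
    apply HS. exact Hsin. }
  assert (HD : forall t, Rabs (sm t xi) <= INR t / 2).
  { intros t. replace (INR t / 2) with (INR t * (1/2)) by field. rewrite <- sm_const. apply sm_abs_le. intros; apply Hxi. }
  assert (HkM : 0 <= cos (th * INR M) / sin (th * INR M) <= 2 * th).
  { assert (hM1 : th * INR M <= PI / 2) by nra.
    assert (hM2 : PI / 2 - th <= th * INR M) by nra.
    assert (0 <= cos (th * INR M)) by (apply cos_ge_0; nra).
    assert (cos (th * INR M) <= th).
    { rewrite <- sin_PI2_minus || idtac.
      replace (cos (th * INR M)) with (sin (PI/2 - th * INR M)) by (rewrite sin_shift; reflexivity).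
      pose proof (sin_le_x (PI/2 - th * INR M) ltac:(lra)). lra. }
    assert (1/2 <= sin (th * INR M)) by (pose proof (sin_ge_half (th * INR M) ltac:(nra)); lra).
    split. apply Rmult_le_pos; [lra| left; apply Rinv_0_lt_compat; lra].
    unfold Rdiv. apply (Rmult_le_reg_r (sin (th * INR M))); [lra|].
    rewrite Rmult_assoc, Rinv_l, Rmult_1_r by lra. nra. }
  assert (HSg : Rabs Sg <= INR (M - 1) * (2 / th ^ 2)).
  { unfold Sg. rewrite <- sm_const. apply sm_abs_le. intros t Ht.
    assert (1 <= INR t) by (apply (le_INR 1); lia).
    assert (ht : INR (S t) <= INR M) by (apply le_INR; lia). rewrite S_INR in ht.
    assert (s1 : th * INR t / 2 <= sin (th * INR t)) by (apply sin_ge_half; nra).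
    assert (s2 : th * INR (S t) / 2 <= sin (th * INR (S t))) by (rewrite S_INR; apply sin_ge_half; nra).
    rewrite S_INR in s2. rewrite S_INR.
    specialize (HD t).
    set (sa := sin (th * INR t)) in *. set (sb := sin (th * (INR t + 1))) in *.
    assert (0 < th * INR t / 2) by nra.
    assert (0 < th * (INR t + 1) / 2) by nra.
    assert (0 < sa * sb) by (apply Rmult_lt_0_compat; lra).
    rewrite Rabs_div by lra. rewrite (Rabs_pos_eq (sa * sb)) by lra.
    apply (Rmult_le_reg_r (sa * sb)); [lra|].
    unfold Rdiv at 1. rewrite Rmult_assoc, Rinv_l, Rmult_1_r by lra.
    assert (th * INR t / 2 * (th * (INR t + 1) / 2) <= sa * sb) by
      (apply Rmult_le_compat; lra).
    assert (E5 : 2 / th ^ 2 * (th * INR t / 2 * (th * (INR t + 1) / 2)) = INR t * (INR t + 1) / 2) by (field; lra).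
    assert (0 < 2 / th ^ 2) by (apply Rdiv_lt_0_compat; nra).
    assert (2 / th ^ 2 * (th * INR t / 2 * (th * (INR t + 1) / 2)) <= 2 / th ^ 2 * (sa * sb)) by
      (apply Rmult_le_compat_l; lra).
    nra. }
  assert (Hsth : Rabs (sin th - th) <= th ^ 3 / 6).
  { assert (Rabs th <= PI) by (rewrite Rabs_pos_eq; lra). pose proof (sin_minus_x th H) as H0. rewrite (Rabs_pos_eq th) in H0 by lra. exact H0. }
  assert (Rtau0 : 0 < INR tau) by lra.
  assert (N1 : INR tau * (1/2)^tau <= 2 / INR tau).
  { pose proof (pow2_ge tau) as P2.
    assert (E6 : 2 ^ tau * (1/2) ^ tau = 1) by (rewrite <- Rpow_mult_distr; replace (2 * (1/2)) with 1 by field; apply pow1).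
    assert (0 < (1/2)^tau) by (apply pow_lt; lra).
    apply (Rmult_le_reg_r (INR tau)); [lra|]. replace (2 / INR tau * INR tau) with 2 by (field; lra).
    replace (INR tau * (1 / 2) ^ tau * INR tau) with (INR tau ^ 2 * (1/2)^tau) by ring.
    assert (INR tau ^ 2 * (1/2)^tau <= 2 * 2 ^ tau * (1/2)^tau) by (apply Rmult_le_compat_r; lra).
    nra. }
  assert (N2 : INR tau * th ^ 2 * (INR tau + 1) ^ 2 <= 14 / INR tau).
  { assert (Y1 : INR tau * (INR tau + 1) <= 11/10 * INR q) by nra.
    assert (Y2 : th * (INR tau * (INR tau + 1)) <= 11/10 * PI) by (rewrite <- Hthq; apply (Rmult_le_compat_l th) in Y1; lra).
    assert (0 <= th * (INR tau * (INR tau + 1))) by (apply Rmult_le_pos; nra).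
    assert (Y3 : (th * (INR tau * (INR tau + 1)))^2 <= 14) by nra.
    apply (Rmult_le_reg_r (INR tau)); [lra|]. replace (14 / INR tau * INR tau) with 14 by (field; lra).
    replace (INR tau * th ^ 2 * (INR tau + 1) ^ 2 * INR tau) with ((th * (INR tau * (INR tau + 1)))^2) by ring.
    exact Y3. }
  assert (N3 : th ^ 2 * INR q <= 11 / INR tau).
  { apply (Rmult_le_reg_r (INR tau)); [lra|]. replace (11 / INR tau * INR tau) with 11 by (field; lra).
    assert (th * INR tau <= PI) by (rewrite <- Hthq; apply Rmult_le_compat_l; nra).
    replace (th ^ 2 * INR q * INR tau) with ((th * INR q) * (th * INR tau)) by ring. rewrite Hthq.
    assert (0 <= th * INR tau) by nra. nra. }
  assert (RMm1 : INR (M - 1) <= INR M) by (apply le_INR; lia).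
  assert (RM0 : 0 <= INR (M - 1)) by apply pos_INR.
  rewrite SL.
  assert (EA : sm tau (fun t => A t - P t) = sm tau A - sm tau P) by apply sm_minus.
  set (e1 := sm tau L - sm tau (fun t => A t - P t)) in X1.
  set (e2 := sm (M - tau) (fun k => L (tau + k)%nat) - sm (M - tau) (fun k => A (tau + k)%nat)) in X2.
  set (DM := sm M xi) in *. set (kM := cos (th * INR M) / sin (th * INR M)) in *.
  assert (EQ : 2 * (sm tau L + sm (M - tau) (fun k => L (tau + k)%nat)) -
      (- 2 * th ^ 2 * c * Sg - 2 * sm tau P)
      = 2 * e1 + 2 * e2 + (-2 * th * c) * (DM * kM) + (-2 * th * c) * ((sin th - th) * Sg)).
  { unfold e1, e2. rewrite EA. rewrite SB in SA. lra. }
  rewrite EQ.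
  assert (B3 : Rabs ((-2 * th * c) * (DM * kM)) <= 2 * th ^ 2 * INR M).
  { assert (Ec : Rabs (-2 * th * c) = 2 * th * c) by (rewrite Rabs_left1 by nra; ring).
    rewrite Rabs_mult, Ec, Rabs_mult, (Rabs_pos_eq kM) by lra.
    specialize (HD M). fold DM in HD.
    assert (0 <= Rabs DM) by apply Rabs_pos.
    assert (Rabs DM * kM <= INR M / 2 * (2 * th)) by (apply Rmult_le_compat; lra).
    assert (2 * th * c <= 2 * th) by nra.
    assert (0 <= Rabs DM * kM) by nra.
    assert (2 * th * c * (Rabs DM * kM) <= 2 * th * (INR M / 2 * (2 * th))) by (apply Rmult_le_compat; nra).
    nra. }
  assert (B4 : Rabs ((-2 * th * c) * ((sin th - th) * Sg)) <= 2/3 * th ^ 2 * INR (M - 1)).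
  { assert (Ec : Rabs (-2 * th * c) = 2 * th * c) by (rewrite Rabs_left1 by nra; ring).
    rewrite Rabs_mult, Ec, Rabs_mult.
    assert (0 <= Rabs (sin th - th)) by apply Rabs_pos.
    assert (0 <= Rabs Sg) by apply Rabs_pos.
    assert (Rabs (sin th - th) * Rabs Sg <= th ^ 3 / 6 * (INR (M - 1) * (2 / th ^ 2))) by (apply Rmult_le_compat; lra).
    assert (th ^ 3 / 6 * (INR (M - 1) * (2 / th ^ 2)) = th * INR (M - 1) / 3) by (field; lra).
    assert (2 * th * c <= 2 * th) by nra.
    assert (0 <= Rabs (sin th - th) * Rabs Sg) by nra.
    assert (2 * th * c * (Rabs (sin th - th) * Rabs Sg) <= 2 * th * (th * INR (M - 1) / 3)) by (apply Rmult_le_compat; nra).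
    nra. }
  assert (B1 : Rabs (2 * e1) <= 2 * (INR tau * ((1/2)^tau + 2 * th^2 * (INR tau + 1)^2))).
  { rewrite Rabs_mult, Rabs_pos_eq by lra. lra. }
  assert (B2 : Rabs (2 * e2) <= 2 * (INR q * th ^ 2 + 4 / INR tau)).
  { rewrite Rabs_mult, Rabs_pos_eq by lra. lra. }
  eapply Rle_trans. apply Rabs_triang.
  eapply Rle_trans. apply Rplus_le_compat_r. apply Rabs_triang.
  eapply Rle_trans. apply Rplus_le_compat_r. apply Rplus_le_compat_r. apply Rabs_triang.
  assert (th ^ 2 * INR M <= th ^ 2 * INR q) by (apply Rmult_le_compat_l; nra).
  assert (th ^ 2 * INR (M - 1) <= th ^ 2 * INR q) by (apply Rmult_le_compat_l; nra).
  assert (E7 : 400 / INR tau = 400 * (1 / INR tau)) by (field; lra).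
  assert (E8 : 2 / INR tau = 2 * (1 / INR tau)) by (field; lra).
  assert (E9 : 14 / INR tau = 14 * (1 / INR tau)) by (field; lra).
  assert (E10 : 11 / INR tau = 11 * (1 / INR tau)) by (field; lra).
  assert (E11 : 4 / INR tau = 4 * (1 / INR tau)) by (field; lra).
  assert (0 < 1 / INR tau) by (apply Rdiv_lt_0_compat; lra).
  rewrite E7. rewrite E8 in N1. rewrite E9 in N2. rewrite E10 in N3. rewrite E11 in B2.
  nra.
Qed.


Lemma q_rec a k : cf_q a (S (S k)) = (cf_a a (S k) * cf_q a (S k) + cf_q a k)%nat.
Proof. reflexivity. Qed.
Lemma p_rec a k : cf_p a (S (S k)) = (cf_a a (S k) * cf_p a (S k) + cf_p a k)%nat.
Proof. reflexivity. Qed.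

Lemma a_spec a k : 0 < gauss a k < 1 ->
  INR (cf_a a (S k)) = / gauss a k - gauss a (S k) /\ (1 <= cf_a a (S k))%nat.
Proof.
  intros [H1 H2]. unfold cf_a. simpl pred. simpl gauss. unfold frac_part.
  assert (Hi : 1 < / gauss a k).
  { apply (Rmult_lt_reg_r (gauss a k)); [lra|]. rewrite Rinv_l by lra. lra. }
  pose proof (base_Int_part (/ gauss a k)) as [B1 B2].
  assert (Hz : (1 <= Int_part (/ gauss a k))%Z).
  { apply le_IZR. assert (IZR (Int_part (/ gauss a k)) > 0) by lra.
    apply lt_IZR in H. apply IZR_le. lia. }
  rewrite INR_IZR_INZ, Z2Nat.id by lia. split. ring. lia.
Qed.

Lemma cf_inv (a : R) (Ha : 0 < a < 1)
  (Hirr : forall (p q : Z), q <> 0%Z -> a <> IZR p / IZR q) : forall k,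
  0 < gauss a k < 1 /\
  a = (INR (cf_p a (S k)) + INR (cf_p a k) * gauss a k) / (INR (cf_q a (S k)) + INR (cf_q a k) * gauss a k) /\
  (1 <= cf_q a (S k))%nat.
Proof.
  induction k.
  - simpl. split; [lra|]. split; [field|lia].
  - destruct IHk as [Hx [Hid Hq]].
    destruct (a_spec a k Hx) as [Ea Ha1].
    assert (Hx0 : 0 <= gauss a (S k) < 1) by (simpl; pose proof (base_fp (/ gauss a k)); lra).
    rewrite q_rec, p_rec.
    assert (Hq2 : (1 <= cf_a a (S k) * cf_q a (S k) + cf_q a k)%nat) by nia.
    assert (Hid' : a = (INR (cf_a a (S k) * cf_p a (S k) + cf_p a k) + INR (cf_p a (S k)) * gauss a (S k)) /
       (INR (cf_a a (S k) * cf_q a (S k) + cf_q a k) + INR (cf_q a (S k)) * gauss a (S k))).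
    { rewrite !plus_INR, !mult_INR, Ea. rewrite Hid at 1.
      assert (1 <= INR (cf_q a (S k))) by (apply (le_INR 1); lia).
      assert (0 <= INR (cf_q a k)) by apply pos_INR.
      assert (0 <= INR (cf_p a k)) by apply pos_INR.
      field. split; [lra|].
      apply Rgt_not_eq. nra. }
    split; [|split; [exact Hid'|exact Hq2]].
    split; [|lra].
    destruct (Rle_lt_dec (gauss a (S k)) 0) as [Hz|Hz]; [|lra].
    exfalso. assert (gauss a (S k) = 0) by lra.
    rewrite H, !Rmult_0_r, !Rplus_0_r in Hid'.
    apply (Hirr (Z.of_nat (cf_a a (S k) * cf_p a (S k) + cf_p a k))
                (Z.of_nat (cf_a a (S k) * cf_q a (S k) + cf_q a k))).
    lia. rewrite <- !INR_IZR_INZ. exact Hid'.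
Qed.

Lemma det_Z a k :
  (Z.of_nat (cf_p a (S (S k))) * Z.of_nat (cf_q a (S k)) - Z.of_nat (cf_p a (S k)) * Z.of_nat (cf_q a (S (S k))) = 1
  \/ Z.of_nat (cf_p a (S (S k))) * Z.of_nat (cf_q a (S k)) - Z.of_nat (cf_p a (S k)) * Z.of_nat (cf_q a (S (S k))) = -1)%Z.
Proof.
  induction k.
  - left. rewrite q_rec, p_rec. simpl. lia.
  - rewrite (q_rec a (S k)), (p_rec a (S k)). rewrite !Nat2Z.inj_add, !Nat2Z.inj_mul.
    match goal with |- (?X = _ \/ _)%Z => 
      assert (EE : (X = - (Z.of_nat (cf_p a (S (S k))) * Z.of_nat (cf_q a (S k)) - Z.of_nat (cf_p a (S k)) * Z.of_nat (cf_q a (S (S k)))))%Z) by ring end.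
    rewrite EE. lia.
Qed.

Lemma pm_ext n f g : (forall t, (1 <= t <= n)%nat -> f t = g t) -> pm n f = pm n g.
Proof. induction n; intros H; simpl; [lra|]. rewrite IHn, H; [lra|lia|]. intros; apply H; lia. Qed.

Lemma det_R a k :
  INR (cf_p a (S (S k))) * INR (cf_q a (S k)) - INR (cf_p a (S k)) * INR (cf_q a (S (S k))) = 1 \/
  INR (cf_p a (S (S k))) * INR (cf_q a (S k)) - INR (cf_p a (S k)) * INR (cf_q a (S (S k))) = -1.
Proof.
  rewrite !INR_IZR_INZ, <- !mult_IZR, <- minus_IZR.
  destruct (det_Z a k) as [H|H]; rewrite H; [left|right]; reflexivity.
Qed.

Lemma q_ge (a : R) (Ha : 0 < a < 1)
  (Hirr : forall (p q : Z), q <> 0%Z -> a <> IZR p / IZR q) : forall k,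
  (k <= cf_q a (S k) /\ S k <= cf_q a (S (S k)))%nat.
Proof.
  induction k.
  - split; [lia|]. apply (cf_inv a Ha Hirr 1).
  - destruct IHk as [H1 H2]. split; [exact H2|].
    rewrite q_rec.
    destruct (cf_inv a Ha Hirr (S k)) as [Hx _].
    destruct (a_spec a (S k) Hx) as [_ Ha1].
    destruct (cf_inv a Ha Hirr k) as [_ [_ Hq]]. nia.
Qed.

Lemma Lambda_eq (a : R) (Ha : 0 < a < 1)
  (Hirr : forall (p q : Z), q <> 0%Z -> a <> IZR p / IZR q) m :
  Rabs (Lambda a (S m)) = c_n a (S m) / INR (cf_q a (S m)).
Proof.
  destruct (cf_inv a Ha Hirr (S m)) as [Hx1 [Hid Hq1]].
  destruct (cf_inv a Ha Hirr m) as [Hx0 [_ Hq0]].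
  destruct (a_spec a m Hx0) as [Ea _].
  pose proof (det_R a m) as Hdet.
  unfold Lambda, c_n, alpha_plus, alpha_minus. simpl pred.
  rewrite q_rec, p_rec in Hid, Hdet. rewrite !plus_INR, !mult_INR, Ea in Hid, Hdet.
  set (g0 := gauss a m) in *. set (g1 := gauss a (S m)) in *.
  set (Q1 := INR (cf_q a (S m))) in *. set (Q0 := INR (cf_q a m)) in *.
  set (P1 := INR (cf_p a (S m))) in *. set (P0 := INR (cf_p a m)) in *.
  assert (1 <= Q1) by (unfold Q1; apply (le_INR 1); lia).
  assert (0 <= Q0) by (unfold Q0; apply pos_INR).
  assert (0 < Q1 / g0) by (apply Rdiv_lt_0_compat; lra).
  assert (Hden : (/ g0 - g1) * Q1 + Q0 + Q1 * g1 = Q1 / g0 + Q0) by (field; lra).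
  rewrite Hden in Hid.
  assert (E1 : Q1 * a - P1 = (Q1 * P0 - P1 * Q0) / (Q1 / g0 + Q0)).
  { rewrite Hid. field. split; [lra| apply Rgt_not_eq; nra]. }
  rewrite E1.
  rewrite Rabs_div by lra. rewrite (Rabs_pos_eq (Q1 / g0 + Q0)) by lra.
  assert (Hd1 : Rabs (Q1 * P0 - P1 * Q0) = 1).
  { destruct Hdet as [Hd|Hd].
    - replace (Q1 * P0 - P1 * Q0) with 1 by lra. apply Rabs_R1.
    - replace (Q1 * P0 - P1 * Q0) with (-1) by lra. rewrite Rabs_left by lra; lra. }
  rewrite Hd1. field. split; [lra|split; [lra|apply Rgt_not_eq; nra]].
Qed.


Lemma frac_sym y n : frac_part y <> 0 -> frac_part (INR n - y) = 1 - frac_part y.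
Proof.
  intros H. pose proof (base_fp y) as [B1 B2].
  destruct (Int_part_frac_part_spec (INR n - y) (Z.of_nat n - Int_part y - 1) (1 - frac_part y)) as [_ E].
  - lra.
  - rewrite !minus_IZR, <- INR_IZR_INZ. pose proof (Rplus_Int_part_frac_part y). simpl. lra.
  - symmetry. exact E.
Qed.

Lemma frac_nonint (P P' Q Q' t : nat) :
  (INR P * INR Q' - INR P' * INR Q = 1 \/ INR P * INR Q' - INR P' * INR Q = -1) ->
  (1 <= t < Q)%nat -> frac_part (INR t * INR Q' / INR Q) <> 0.
Proof.
  intros Hd Ht H0. apply fp_nat in H0 as [z Hz].
  assert (HQ : 0 < INR Q) by (apply lt_0_INR; lia).
  assert (Hz' : INR t * INR Q' = IZR z * INR Q) by (rewrite <- Hz; field; lra).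
  assert (HW : INR Q * (INR P * IZR z - INR t * INR P') = INR t \/ INR Q * (INR P * IZR z - INR t * INR P') = - INR t).
  { destruct Hd as [Hd|Hd]; [left|right]; 
    replace (INR Q * (INR P * IZR z - INR t * INR P')) with (INR P * (IZR z * INR Q) - INR t * INR P' * INR Q) by ring;
    rewrite <- Hz'; replace (INR t) with (INR t * 1) at 3 by ring; try (replace (- (INR t * 1)) with (INR t * -1) by ring);
    rewrite <- Hd; ring. }
  rewrite !INR_IZR_INZ in HW. rewrite <- !mult_IZR, <- minus_IZR, <- mult_IZR in HW.
  destruct HW as [HW|HW]; [|rewrite <- opp_IZR in HW]; apply eq_IZR in HW;
  set (W := (Z.of_nat P * z - Z.of_nat t * Z.of_nat P')%Z) in HW;
  destruct (Z.le_gt_cases W 0) as [h1|h1]; try nia;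
  destruct (Z.le_gt_cases W (-1)) as [h2|h2]; nia.
Qed.

Theorem lemma4p4 (alpha : R)
  (Ha : 0 < alpha < 1)
  (Hirr : forall (p q : Z), q <> 0%Z -> alpha <> IZR p / IZR q) :
  exists (C : R) (N : nat), forall n : nat, (N <= n)%nat ->
    let q := INR (cf_q alpha n) in
    let c := c_n alpha n in
    let tau := tau_n alpha n in
    Rabs (ln (B_n alpha n)
          - ( - 2 * PI ^ 2 * (c / q ^ 2)
                * sumR 1 (M_n alpha n - 1)
                    (fun t => D t (alpha_minus alpha n)
                              / (sin (PI * INR t / q) * sin (PI * INR (S t) / q)))
              - 2 * sumR 1 tau (fun t =>
                      sumR 2 tau (fun j =>
                        / INR j * (c * xi alpha n t / INR t) ^ j))))
      <= C / INR tau.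
Proof.
  exists 400, 101%nat. intros n Hn. cbv zeta.
  destruct n as [|[|m]]; [lia|lia|].
  set (n := S (S m)).
  pose proof (q_ge alpha Ha Hirr m) as [_ Hq100]. fold n in Hq100.
  assert (Hq : (100 <= cf_q alpha n)%nat) by (unfold n in *; lia).
  set (Q := cf_q alpha n) in *.
  assert (RQ : 100 <= INR Q) by (rewrite <- INR100; apply le_INR; lia).
  set (c := c_n alpha n).
  destruct (cf_inv alpha Ha Hirr (S m)) as [Hx1 _].
  assert (Hc : 0 <= c <= 1).
  { unfold c, c_n, alpha_plus, alpha_minus. replace (pred n) with (S m) by reflexivity. fold Q.
    assert (1 < / gauss alpha (S m)).
    { apply (Rmult_lt_reg_r (gauss alpha (S m))); [lra|]. rewrite Rinv_l by lra. lra. }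
    assert (0 <= INR (cf_q alpha (S m)) / INR Q) by (apply Rmult_le_pos; [apply pos_INR| left; apply Rinv_0_lt_compat; lra]).
    split. left; apply Rinv_0_lt_compat; lra.
    rewrite <- Rinv_1. apply Rinv_le_contravar; lra. }
  assert (HL : Rabs (Lambda alpha n) = c / INR Q) by (apply Lambda_eq; auto).
  set (x := xi alpha n).
  assert (Hxi : forall t, Rabs (x t) <= 1/2).
  { intros t. unfold x, xi. fold Q. pose proof (base_fp (INR t * INR (cf_q alpha (pred n)) / INR Q)) as [B1 B2].
    apply Rabs_le. lra. }
  assert (Hsym : forall t, (1 <= t <= Q - 1)%nat -> x (Q - t)%nat = - x t).
  { intros t Ht. unfold x, xi. fold Q.
    replace (pred n) with (S m) by reflexivity.
    rewrite minus_INR by lia.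
    replace ((INR Q - INR t) * INR (cf_q alpha (S m)) / INR Q) with
      (INR (cf_q alpha (S m)) - INR t * INR (cf_q alpha (S m)) / INR Q) by (field; lra).
    rewrite frac_sym. lra.
    apply (frac_nonint (cf_p alpha n) (cf_p alpha (S m)) Q (cf_q alpha (S m)) t); [|lia].
    apply det_R. }
  pose proof (analytic Q c x Hq Hc Hxi Hsym) as HA. cbv zeta in HA.
  set (th := PI / INR Q) in *.
  assert (EB : B_n alpha n = Rabs (pm (Q - 1) (fun t => sin (th * (INR t - c * x t)) / sin (th * INR t)))).
  { unfold B_n. fold Q. rewrite prodR1. f_equal. apply pm_ext. intros t Ht.
    unfold s_nt. fold Q. rewrite HL. fold x.
    assert (1 <= INR t) by (apply (le_INR 1); lia).
    assert (INR t <= INR Q - 1) by (assert (INR (Q - 1) = INR Q - 1) by (rewrite minus_INR by lia; reflexivity); assert (INR t <= INR (Q - 1)) by (apply le_INR; lia); lra).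
    assert (Hs : 0 < sin (th * INR t)).
    { pose proof PI_bounds. apply sin_gt_0. unfold th. apply Rmult_lt_0_compat; [apply Rdiv_lt_0_compat; lra|lra].
      unfold th. replace (PI / INR Q * INR t) with (PI * (INR t / INR Q)) by (field; lra).
      pose proof PI_bounds. assert (INR t / INR Q < 1) by (apply (Rmult_lt_reg_r (INR Q)); [lra|]; field_simplify; lra).
      nra. }
    replace (PI * (INR t / INR Q - c / INR Q * x t)) with (th * (INR t - c * x t)) by (unfold th; field; lra).
    replace (PI * INR t / INR Q) with (th * INR t) by (unfold th; field; lra).
    field. lra. }
  assert (E1 : sumR 1 (M_n alpha n - 1)
                    (fun t => D t (alpha_minus alpha n)
                              / (sin (PI * INR t / INR Q) * sin (PI * INR (S t) / INR Q)))
             = sm ((Q - 1) / 2 - 1) (fun t => sm t x / (sin (th * INR t) * sin (th * INR (S t))))).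
  { rewrite sumR1. unfold M_n. fold Q. apply sm_ext. intros t Ht.
    unfold D. rewrite sumR1.
    replace (PI * INR t / INR Q) with (th * INR t) by (unfold th; field; lra).
    replace (PI * INR (S t) / INR Q) with (th * INR (S t)) by (unfold th; field; lra).
    f_equal. apply sm_ext. intros s Hs. unfold x, xi, alpha_minus. fold Q.
    f_equal. f_equal. field. lra. }
  assert (Htau1 : (1 <= Nat.sqrt Q)%nat).
  { pose proof (Nat.sqrt_spec Q ltac:(lia)). nia. }
  assert (E2 : sumR 1 (tau_n alpha n) (fun t =>
                      sumR 2 (tau_n alpha n) (fun j =>
                        / INR j * (c * x t / INR t) ^ j))
             = sm (Nat.sqrt Q) (fun t => sm (Nat.sqrt Q) (fun j => (c * x t / INR t) ^ j / INR j) - c * x t / INR t)).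
  { unfold tau_n. fold Q. rewrite sumR1. apply sm_ext. intros t Ht.
    rewrite sumR2 by lia. fold x.
    rewrite (sm_ext _ (fun j => / INR j * (c * x t / INR t) ^ j) (fun j => (c * x t / INR t) ^ j / INR j))
      by (intros; unfold Rdiv; ring).
    change (INR 1) with 1. rewrite Rinv_1, pow_1, Rmult_1_l. reflexivity. }
  assert (EP : - 2 * PI ^ 2 * (c / INR Q ^ 2) = - 2 * th ^ 2 * c) by (unfold th; field; lra).
  fold Q. rewrite EB, E1, E2, EP. unfold tau_n. fold Q. exact HA.
Qed.
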